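(* For stochastic CA $\mathcal{A}_1,\mathcal{A}_2$: if $\mathcal{A}_1\sqsubseteq^S_i\mathcal{A}_2$ then $\mathcal{A}_1\sqsubseteq^N_i\mathcal{A}_2$; if $\mathcal{A}_1\sqsubseteq^S_\pi\mathcal{A}_2$ then $\mathcal{A}_1\sqsubseteq^N_\pi\mathcal{A}_2$; and if $\mathcal{A}_1\sqsubseteq^S_m\mathcal{A}_2$ then $\mathcal{A}_1\sqsubseteq^N_m\mathcal{A}_2$.
   Context: A stochastic CA is $(Q,R,V,V',f)$ with $Q$ finite states, $R$ finite random symbols, $V=\{v_1,\dots,v_r\}$, $V'=\{v'_1,\dots,v'_{r'}\}$ finite subsets of $\mathbb{Z}$, $f:Q^r\times R^{r'}\to Q$; explicit global function $F(c,s)_z=f((c_{z+v_1},\dots,c_{z+v_r}),(s_{z+v'_1},\dots,s_{z+v'_{r'}}))$. Non-deterministic global function $N_F(c)=\{F(c,s):s\in R^{\mathbb{Z}}\}$; stochastic global function $S_F(c)$ = law of $F(c,s)$ for $s$ distributed by the uniform Bernoulli measure on $R^{\mathbb{Z}}$. Iterates: $F^0(c)=c$, $F^{t+1}(c,s^1,\dots,s^{t+1})=F(F^t(c,s^1,\dots,s^t),s^{t+1})$. Restriction: for injective $i:Q'\to Q$ with $Y=i(Q')^{\mathbb{Z}}$ satisfying $F(Y,R^{\mathbb{Z}})\subseteq Y$, the $i$-restriction has states $Q'$, random symbols $R$, explicit global function $I^{-1}(F(I(c),s))$ ($I$ the cellwise extension of $i$). Projection: for surjective $\pi:Q\to Q'$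 with cellwise extension $\Pi$ such that $\Pi(F(c,s))=\Pi(F(c',s))$ whenever $\Pi(c)=\Pi(c')$, the $\pi$-projection has states $Q'$, random symbols $R$, explicit global function $(c',s)\mapsto\Pi(F(c,s))$ for any $c\in\Pi^{-1}(c')$. Rescaling with $m,t\ge1,k\in\mathbb{Z}$: $\mathcal{A}^{\langle m,t,k\rangle}$ has states $Q^m$, random symbols $(R^m)^t$, explicit global function $b_m\circ\sigma_k\circ F^t(b_m^{-1}(c),b_m^{-1}(s^1),\dots,b_m^{-1}(s^t))$ where $s^i_j=(s_j)_i$, $\sigma_k(c)_z=c_{z+k}$, $b_m(c)_z=(c_{mz},\dots,c_{mz+m-1})$. For $X\in\{S,N\}$: $\mathcal{A}_1\sqsubseteq^X_i\mathcal{A}_2$ (resp. $\sqsubseteq^X_\pi$, $\sqsubseteq^X_m$) iff there are $m_1,m_2,t_1,t_2,k_1,k_2$ such that $\mathcal{A}_1^{\langle m_1,t_1,k_1\rangle}$ has the same stochastic (for $X=S$) or non-deterministic (for $X=N$) global function as some $i$-restriction (resp. some $\pi$-projection, resp. some $\pi$-projection of some $i$-restriction) of $\mathcal{A}_2^{\langle m_2,t_2,k_2\rangle}$. *)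

(* Defs.v *)
From mathcomp Require Import all_boot all_order all_algebra.
Set Implicit Arguments. Unset Strict Implicit. Unset Printing Implicit Defensive.
Import Order.TTheory GRing.Theory Num.Theory.
Local Open Scope ring_scope.

(* A stochastic CA (Q,R,V,V',f): V = (v_1..v_r), V' = (v'_1..v'_r') listed as
   sequences of integers, f : Q^r x R^r' -> Q. *)
Record sca := SCA {
  sQ : finType ;
  sR : finType ;
  sV : seq int ;
  sV' : seq int ;
  sf : (size sV).-tuple sQ -> (size sV').-tuple sR -> sQ }.

Definition gdyn (Q R : Type) := (int -> Q) -> (int -> R) -> (int -> Q).

Definition glob (A : sca) : gdyn (sQ A) (sR A) :=
  fun c s z => sf (map_tuple (fun v => c (z + v)) (in_tuple (sV A)))
                  (map_tuple (fun v => s (z + v)) (in_tuple (sV' A))).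
Arguments glob : clear implicits.

(* Iterates: giter F t c ss = F^t(c, ss 0, ..., ss (t-1)), i.e. s^i = ss (i-1). *)
Fixpoint giter (Q R : Type) (F : gdyn Q R) (t : nat) (c : int -> Q)
  (ss : nat -> int -> R) : int -> Q :=
  match t with
  | 0 => c
  | t'.+1 => F (giter F t' c ss) (ss t')
  end.

Definition shift (X : Type) (k : int) (y : int -> X) : int -> X := fun z => y (z + k).

(* b_n with block size n = m.+1 : b(c)_z = (c_{nz}, ..., c_{nz+n-1}) *)
Definition bm (X : Type) (m : nat) (y : int -> X) : int -> {ffun 'I_m.+1 -> X} :=
  fun z => [ffun i : 'I_m.+1 => y (m.+1%:Z * z + (i : nat)%:Z)].

Definition unbm (X : Type) (m : nat) (c : int -> {ffun 'I_m.+1 -> X}) : int -> X :=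
  fun x => c (x %/ m.+1%:Z)%Z (inord (absz (x %% m.+1%:Z)%Z)).

(* Rescaling <m.+1, t.+1, k> (block size m.+1 >= 1, time t.+1 >= 1, shift k):
   states Q^(m+1), random symbols (R^(m+1))^(t+1), global function
   b o sigma_k o F^(t+1)(b^{-1}(c), b^{-1}(s^1), ..., b^{-1}(s^(t+1)))
   where s^i_j = (s_j)_i. *)
Definition rescale_g (Q R : Type) (F : gdyn Q R) (m t : nat) (k : int) :
  gdyn {ffun 'I_m.+1 -> Q} {ffun 'I_t.+1 -> {ffun 'I_m.+1 -> R}} :=
  fun c s => bm m (shift k (giter F t.+1 (unbm c)
                      (fun j => unbm (fun z => s z (inord j))))).
Arguments rescale_g {Q R} F m t k.

Definition rescale (A : sca) (m t : nat) (k : int) :=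
  rescale_g (glob A) m t k.
Arguments rescale : clear implicits.

(* G is the i-restriction of F (i injective, Y = i(Q')^Z invariant,
   G = I^{-1} o F o I). *)
Definition is_restriction (Q Q' R : Type) (i : Q' -> Q) (F : gdyn Q R)
  (G : gdyn Q' R) : Prop :=
  injective i /\
  (forall (c : int -> Q') (s : int -> R) (z : int),
      exists q' : Q', F (fun x => i (c x)) s z = i q') /\
  (forall (c : int -> Q') (s : int -> R) (z : int),
      i (G c s z) = F (fun x => i (c x)) s z).

Definition is_projection (Q Q' R : Type) (pi : Q -> Q') (F : gdyn Q R)
  (G : gdyn Q' R) : Prop :=
  (forall q' : Q', exists q : Q, pi q = q') /\
  (forall (c c' : int -> Q) (s : int -> R),
      (forall x, pi (c x) = pi (c' x)) ->
      forall z, pi (F c s z) = pi (F c' s z)) /\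
  (forall (c : int -> Q) (s : int -> R) (z : int),
      G (fun x => pi (c x)) s z = pi (F c s z)).

Definition Nglob (Q R : Type) (F : gdyn Q R) (c : int -> Q) : (int -> Q) -> Prop :=
  fun y => exists s : int -> R, F c s = y.

Definition sameN (Q R1 R2 : Type) (F : gdyn Q R1) (G : gdyn Q R2) : Prop :=
  forall (c : int -> Q) (y : int -> Q), Nglob F c y <-> Nglob G c y.

Definition fill (R : Type) (s0 : int -> R) (a : int) (L : nat)
  (w : {ffun 'I_L.+1 -> R}) : int -> R :=
  fun x => if (a <= x) && (x <= a + L%:Z) then w (inord (absz (x - a))) else s0 x.

(* Proportion of the random patterns on the window [a-K, a+n-1+K] (filled with
   s0 outside) for which F(c,s) shows pattern p on the cells a, ..., a+n-1.
   For a local F and K at least its radius this is exactly the probability,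
   under the uniform Bernoulli measure, of the cylinder
   {y | y_(a+i) = p_i, i < n} for the law S_F(c). *)
Definition cylfrac (Q R : finType) (F : gdyn Q R) (c : int -> Q) (a : int)
  (n : nat) (p : {ffun 'I_n -> Q}) (K : nat) (s0 : int -> R) : rat :=
  (#|[set w : {ffun 'I_(n + K + K).+1 -> R} |
       [forall i : 'I_n, F c (fill s0 (a - K%:Z) w) (a + (i : nat)%:Z) == p i]]|)%:R
  / (#|R| ^ (n + K + K).+1)%:R.

(* Equality of stochastic global functions: for every configuration c, the
   laws S_F(c) and S_G(c) give the same probability to every cylinder set
   (which determines a probability measure on Q^Z). *)
Definition sameS (Q R1 R2 : finType) (F : gdyn Q R1) (G : gdyn Q R2) : Prop :=
  forall (c : int -> Q) (a : int) (n : nat) (p : {ffun 'I_n -> Q}),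
    exists K0 : nat, forall K : nat, (K0 <= K)%N ->
      forall (s1 : int -> R1) (s2 : int -> R2),
        cylfrac F c a p K s1 = cylfrac G c a p K s2.

Inductive mode := Smode | Nmode.

Definition same (X : mode) (Q R1 R2 : finType) (F : gdyn Q R1) (G : gdyn Q R2) : Prop :=
  match X with Smode => sameS F G | Nmode => sameN F G end.

(* In all three relations, rescaling parameters m_j, t_j >= 1 are written
   m_j.+1, t_j.+1 with m_j, t_j : nat. *)

Definition sim_i (X : mode) (A1 A2 : sca) : Prop :=
  exists (m1 m2 t1 t2 : nat) (k1 k2 : int)
    (i : {ffun 'I_m1.+1 -> sQ A1} -> {ffun 'I_m2.+1 -> sQ A2})
    (G : gdyn {ffun 'I_m1.+1 -> sQ A1} {ffun 'I_t2.+1 -> {ffun 'I_m2.+1 -> sR A2}}),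
    is_restriction i (rescale A2 m2 t2 k2) G /\
    same X (rescale A1 m1 t1 k1) G.

Definition sim_pi (X : mode) (A1 A2 : sca) : Prop :=
  exists (m1 m2 t1 t2 : nat) (k1 k2 : int)
    (pi : {ffun 'I_m2.+1 -> sQ A2} -> {ffun 'I_m1.+1 -> sQ A1})
    (G : gdyn {ffun 'I_m1.+1 -> sQ A1} {ffun 'I_t2.+1 -> {ffun 'I_m2.+1 -> sR A2}}),
    is_projection pi (rescale A2 m2 t2 k2) G /\
    same X (rescale A1 m1 t1 k1) G.

Definition sim_m (X : mode) (A1 A2 : sca) : Prop :=
  exists (m1 m2 t1 t2 : nat) (k1 k2 : int) (Q' : finType)
    (i : Q' -> {ffun 'I_m2.+1 -> sQ A2})
    (G1 : gdyn Q' {ffun 'I_t2.+1 -> {ffun 'I_m2.+1 -> sR A2}})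
    (pi : Q' -> {ffun 'I_m1.+1 -> sQ A1})
    (G : gdyn {ffun 'I_m1.+1 -> sQ A1} {ffun 'I_t2.+1 -> {ffun 'I_m2.+1 -> sR A2}}),
    is_restriction i (rescale A2 m2 t2 k2) G1 /\
    is_projection pi G1 G /\
    same X (rescale A1 m1 t1 k1) G.

(* Main.v *)
Require Import Defs.
From mathcomp Require Import all_boot all_order all_algebra zify.
From Stdlib Require Import Classical ClassicalEpsilon FunctionalExtensionality.
Import Order.TTheory GRing.Theory Num.Theory.
Set Implicit Arguments. Unset Strict Implicit.
Local Open Scope ring_scope.

Definition local2 (Q R : Type) (F : gdyn Q R) (r : nat) :=
  forall c c' s s' z, (forall x, (absz (x - z) <= r)%N -> c x = c' x /\ s x = s' x) ->
    F c s z = F c' s' z.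

Lemma bigmax_seq (s : seq int) v : v \in s -> (absz v <= \max_(w <- s) absz w)%N.
Proof. move=> h. rewrite (big_rem v h) /=. apply: leq_maxl. Qed.

Lemma glob_local (A : sca) : local2 (glob A) (\max_(w <- sV A ++ sV' A) absz w).
Proof.
move=> c c' s s' z H. rewrite /glob. congr sf; apply: val_inj => /=; apply/eq_in_map => v hv.
- have : (absz (z + v - z)%R <= \max_(w <- sV A ++ sV' A) absz w)%N.
    by rewrite addrC addKr; apply: bigmax_seq; rewrite mem_cat hv.
  by move/H => [].
- have : (absz (z + v - z)%R <= \max_(w <- sV A ++ sV' A) absz w)%N.
    by rewrite addrC addKr; apply: bigmax_seq; rewrite mem_cat hv orbT.
  by move/H => [].
Qed.

Lemma giter_local (Q R : Type) (F : gdyn Q R) r : local2 F r ->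
  forall t c c' ss ss' z,
  (forall x, (absz (x - z) <= t * r)%N -> c x = c' x /\ forall j, (j < t)%N -> ss j x = ss' j x) ->
  giter F t c ss z = giter F t c' ss' z.
Proof.
move=> hF; elim=> [|t IH] c c' ss ss' z H /=.
  by have := H z; rewrite subrr /= => /(_ isT) [].
apply: hF => x hx; split.
  apply: IH => x' hx'. have : (absz (x' - z) <= t.+1 * r)%N.
    rewrite mulSn; lia.
  move/H => [h1 h2]; split=> // j hj; apply: h2; lia.
have : (absz (x - z) <= t.+1 * r)%N by rewrite mulSn; lia.
by move/H => [_ ->].
Qed.

Lemma divbound (x z : int) (M : nat) : (0 < M)%N -> (absz ((x %/ M%:Z)%Z - z)%R <= absz (x - M%:Z * z)%R)%N.
Proof. intros hM. have h0 : M%:Z != 0 by lia. have hp : (0 < M%:Z) by lia.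
have := divz_eq x M%:Z. have := modz_ge0 x h0. have := ltz_pmod x hp.
set q := (x %/ M%:Z)%Z. set r := (x %% M%:Z)%Z. move=> h3 h4 h5.
nia.
Qed.

Definition localS (Q R : Type) (F : gdyn Q R) (r : nat) :=
  forall c s s' z, (forall x, (absz (x - z) <= r)%N -> s x = s' x) ->
    F c s z = F c s' z.

Lemma rescale_local A m t k : exists r, localS (rescale A m t k) r.
Proof.
set r0 := (\max_(w <- sV A ++ sV' A) absz w).
exists (t.+1 * r0 + m.+1 + absz k)%N => c s s' z H.
rewrite /rescale /rescale_g /bm; apply/ffunP => i; rewrite !ffunE /shift.
apply: (giter_local (@glob_local A)) => x hx; split=> // j hj.
rewrite /unbm. have -> // : s (x %/ m.+1%:Z)%Z = s' (x %/ m.+1%:Z)%Z.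
apply: H. apply: leq_trans (divbound x z (ltn0Sn m)) _.
have := ltn_ord i. move: hx. rewrite -/r0. lia.
Qed.
Section Compact.
Variables (Q R : finType) (G : gdyn Q R) (r : nat) (c : int -> Q) (y : int -> Q).
Hypothesis hG : localS G r.
Variable r0 : R.

Definition good (N : nat) (u : int -> R) := forall M : nat, exists s',
  (forall z, (absz z < N)%N -> s' z = u z) /\ (forall z, (absz z <= M)%N -> G c s' z = y z).

Definition ext (N : nat) (u : int -> R) (a b : R) : int -> R :=
  fun z => if z == N%:Z then b else if z == - N%:Z then a else u z.

Lemma ext_agree N u a b z : (absz z < N)%N -> ext N u a b z = u z.
Proof.
move=> h; rewrite /ext. case: eqP => [e|_]; first by exfalso; lia.
case: eqP => [e|_] //; by exfalso; lia.
Qed.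

Lemma step N u : good N u -> exists u', good N.+1 u' /\ forall z, (absz z < N)%N -> u' z = u z.
Proof.
move=> hg. apply: NNPP => hn.
have hab : forall ab : R * R, exists M : nat, ~ (exists s',
  (forall z, (absz z < N.+1)%N -> s' z = ext N u ab.1 ab.2 z) /\ (forall z, (absz z <= M)%N -> G c s' z = y z)).
  move=> ab. apply: not_all_ex_not => hgood. apply: hn. exists (ext N u ab.1 ab.2); split=> //.
  by move=> z hz; apply: ext_agree.
pose Mf ab := proj1_sig (constructive_indefinite_description _ (hab ab)).
have hMf ab := proj2_sig (constructive_indefinite_description _ (hab ab)).
pose Mx := (\max_(ab : R * R) Mf ab)%N.
have [s' [h1 h2]] := hg Mx.
pose ab := (s' (- N%:Z), s' N%:Z).
apply: (hMf ab). exists s'; split.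
  move=> z hz. rewrite /ext /=. case: eqP => [->|n1] //. case: eqP => [->|n2] //.
  apply: h1. lia.
move=> z hz. apply: h2. apply: leq_trans hz _. exact: (leq_bigmax ab).
Qed.

Fixpoint useq (N : nat) : int -> R :=
  match N with
  | 0 => fun _ => r0
  | N'.+1 => epsilon (inhabits (fun _ => r0))
      (fun u' => good N'.+1 u' /\ forall z, (absz z < N')%N -> u' z = useq N' z)
  end.

Hypothesis hwin : forall M : nat, exists s', forall z, (absz z <= M)%N -> G c s' z = y z.

Lemma useq_good N : good N (useq N) /\ forall z, (absz z < N)%N -> useq N.+1 z = useq N z.
Proof.
elim: N => [|N [IH _]].
  split=> // M; have [s' hs] := hwin M; by exists s'; split.
move: (step IH) => /(epsilon_spec (inhabits (fun _ => r0))) [g1' _].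
split; first exact g1'.
have := step g1'. by move/(epsilon_spec (inhabits (fun _ => r0))) => [].
Qed.

Lemma useq_stable d N z : (absz z < N)%N -> useq (N + d) z = useq N z.
Proof.
move=> h; elim: d => [|d IH]; first by rewrite addn0.
rewrite addnS (proj2 (useq_good _)) //; lia.
Qed.

Lemma compact_ex : exists s, G c s = y.
Proof.
pose s z := useq (absz z).+1 z.
have hs N z : (absz z < N)%N -> s z = useq N z.
  move=> h. rewrite /s. have -> : N = ((absz z).+1 + (N - (absz z).+1))%N by lia.
  by rewrite useq_stable.
exists s; apply: functional_extensionality => z.
pose N := (absz z + r + 1)%N.
have [s' [h1 h2]] := proj1 (useq_good N) (absz z).
rewrite -(h2 z (leqnn _)).
transitivity (G c (useq N) z).
  apply: hG => x hx. apply: hs. lia.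
apply: hG => x hx. rewrite h1 //. lia.
Qed.
End Compact.
Lemma fill_self (R : Type) (s : int -> R) (a : int) (L : nat) :
  fill s a [ffun j : 'I_L.+1 => s (a + (j : nat)%:Z)] = s.
Proof.
apply: functional_extensionality => x; rewrite /fill.
case: ifP => // /andP [h1 h2]. rewrite ffunE inordK; last by lia.
congr s. lia.
Qed.

Lemma window (Q R1 R2 : finType) (F : gdyn Q R1) (G : gdyn Q R2) (c : int -> Q) (y : int -> Q) (r2 : R2) :
  (forall (a : int) (n : nat) (p : {ffun 'I_n -> Q}),
    exists K0 : nat, forall K : nat, (K0 <= K)%N ->
      forall (s1 : int -> R1) (s2 : int -> R2),
        cylfrac F c a p K s1 = cylfrac G c a p K s2) ->
  Nglob F c y ->
  forall M : nat, exists s', forall z, (absz z <= M)%N -> G c s' z = y z.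
Proof.
move=> hS [s hs] M.
pose a : int := - M%:Z. pose n := (M + M).+1.
pose p := [ffun i : 'I_n => y (a + (i : nat)%:Z)].
have [K0 hK] := hS a n p.
have := hK K0 (leqnn _) s (fun _ => r2).
rewrite /cylfrac.
set A1 := [set w | _]. set A2 := [set w | _].
have hA1 : (0 < #|A1|)%N.
  apply/card_gt0P. exists [ffun j : 'I_(n + K0 + K0).+1 => s (a - K0%:Z + (j : nat)%:Z)].
  rewrite inE. apply/forallP => i. rewrite fill_self hs ffunE. by [].
have hden : (0 : rat) < (#|R1| ^ (n + K0 + K0).+1)%:R.
  rewrite ltr0n expn_gt0. apply/orP; left. apply/card_gt0P. by exists (s 0).
move=> e. have hA2 : (0 < #|A2|)%N.
  rewrite lt0n. apply/negP => /eqP h0. move: e. rewrite h0 mul0r => e.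
  have : (0 : rat) < #|A1|%:R / (#|R1| ^ (n + K0 + K0).+1)%:R.
    by rewrite divr_gt0 // ltr0n.
  by rewrite e ltxx.
move/card_gt0P: hA2 => [w]. rewrite inE => /forallP hw.
exists (fill (fun _ => r2) (a - K0%:Z) w) => z hz.
have hi : (absz (z - a) < n)%N by lia.
have := hw (Ordinal hi). rewrite ffunE /= => /eqP.
have -> : a + (absz (z - a))%:Z = z by lia.
by [].
Qed.

Lemma restr_local (Q Q' R : Type) (i : Q' -> Q) (F : gdyn Q R) (G : gdyn Q' R) (r : nat) :
  is_restriction i F G -> localS F r -> localS G r.
Proof.
move=> [hinj [_ heq]] hF c s s' z H. apply: hinj. rewrite !heq. exact: hF.
Qed.

Lemma proj_local (Q Q' R : Type) (pi : Q -> Q') (F : gdyn Q R) (G : gdyn Q' R) (r : nat) :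
  is_projection pi F G -> localS F r -> localS G r.
Proof.
move=> [hsurj [_ heq]] hF c' s s' z H.
pose pre q' := proj1_sig (constructive_indefinite_description _ (hsurj q')).
have hpre q' : pi (pre q') = q' := proj2_sig (constructive_indefinite_description _ (hsurj q')).
have -> : c' = (fun x => pi (pre (c' x))).
  by apply: functional_extensionality => x; rewrite hpre.
rewrite !heq. congr pi. exact: hF.
Qed.

Lemma S_to_N (Q R1 R2 : finType) (F : gdyn Q R1) (G : gdyn Q R2) rF rG :
  localS F rF -> localS G rG -> (0 < #|R1|)%N -> (0 < #|R2|)%N -> sameS F G -> sameN F G.
Proof.
move=> hF hG h1 h2 hS c y.
case/card_gt0P: h1 => r1 _. case/card_gt0P: h2 => r2 _.
split=> hN.
  have [s hs] := compact_ex hG r2 (window r2 (hS c) hN). by exists s.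
have hS' : forall (a : int) (n : nat) (p : {ffun 'I_n -> Q}),
    exists K0 : nat, forall K : nat, (K0 <= K)%N ->
      forall (s1 : int -> R2) (s2 : int -> R1),
        cylfrac G c a p K s1 = cylfrac F c a p K s2.
  move=> a n p. have [K0 h] := hS c a n p. exists K0 => K hK s1 s2. by rewrite (h K hK s2 s1).
have [s hs] := compact_ex hF r1 (window r1 hS' hN). by exists s.
Qed.

Lemma ffun_gt0 (I T : finType) : (0 < #|T|)%N -> (0 < #|{ffun I -> T}|)%N.
Proof. by move=> h; rewrite card_ffun expn_gt0 h. Qed.

Lemma cardT_gt0 (T : finType) (x : T) : (0 < #|T|)%N.
Proof. by apply/card_gt0P; exists x. Qed.

Theorem fact4 (A1 A2 : sca) (hR1 : (0 < #|sR A1|)%N) (hR2 : (0 < #|sR A2|)%N) :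
  (sim_i Smode A1 A2 -> sim_i Nmode A1 A2) /\
  (sim_pi Smode A1 A2 -> sim_pi Nmode A1 A2) /\
  (sim_m Smode A1 A2 -> sim_m Nmode A1 A2).
Proof.
split; [|split].
- move=> [m1 [m2 [t1 [t2 [k1 [k2 [i [G [hr hs]]]]]]]]].
  exists m1, m2, t1, t2, k1, k2, i, G; split=> //.
  case/card_gt0P: hR1 => e1 _; case/card_gt0P: hR2 => e2 _.
  have [r1 l1] := rescale_local A1 m1 t1 k1. have [r2 l2] := rescale_local A2 m2 t2 k2.
  exact: (S_to_N l1 (restr_local hr l2) (cardT_gt0 [ffun _ => [ffun _ => e1]]) (cardT_gt0 [ffun _ => [ffun _ => e2]]) hs).
- move=> [m1 [m2 [t1 [t2 [k1 [k2 [i [G [hr hs]]]]]]]]].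
  exists m1, m2, t1, t2, k1, k2, i, G; split=> //.
  case/card_gt0P: hR1 => e1 _; case/card_gt0P: hR2 => e2 _.
  have [r1 l1] := rescale_local A1 m1 t1 k1. have [r2 l2] := rescale_local A2 m2 t2 k2.
  exact: (S_to_N l1 (proj_local hr l2) (cardT_gt0 [ffun _ => [ffun _ => e1]]) (cardT_gt0 [ffun _ => [ffun _ => e2]]) hs).
- move=> [m1 [m2 [t1 [t2 [k1 [k2 [Q' [i [G1 [pi [G [hr [hp hs]]]]]]]]]]]]].
  exists m1, m2, t1, t2, k1, k2, Q', i, G1, pi, G; split=> //; split=> //.
  case/card_gt0P: hR1 => e1 _; case/card_gt0P: hR2 => e2 _.
  have [r1 l1] := rescale_local A1 m1 t1 k1. have [r2 l2] := rescale_local A2 m2 t2 k2.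
  exact: (S_to_N l1 (proj_local hp (restr_local hr l2)) (cardT_gt0 [ffun _ => [ffun _ => e1]]) (cardT_gt0 [ffun _ => [ffun _ => e2]]) hs).
Qed.
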